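(* Let $\mathcal{D}=\{(X_i,B_i):i\in I\}$ be a collection of random variable/nonempty event pairs with coherent$_1$ conditional previsions $\{P(X_i\mid B_i):i\in I\}$. Let $X$ be a random variable and $B$ a nonempty event such that $(B,\Omega)\in\mathcal{D}$ and $(XB,\Omega)\in\mathcal{D}$, where $XB$ is the product of $X$ with the indicator of $B$, and $P(B)=P(B\mid\Omega)=0$. (1) If $P(XB)=P(XB\mid\Omega)\ne0$, the only value $p$ for which the previsions in $\mathcal{D}$ together with $P(X\mid B)=p$ are coherent$_1$ is the infinite value with the same sign as $P(XB)$. (2) If $P(XB)=0$, then for every extended real number $p$, the previsions in $\mathcal{D}$ together with $P(X\mid B)=p$ are coherent$_1$.
   Context: Let $\Omega$ be a nonempty set of states $\omega$; events are subsets of $\Omega$ and random variables are real-valued functions on $\Omega$. An event $B$ is identified with its indicator function. A conditional prevision $P(X\mid B)$ is an extended real number; $P(X)=P(X\mid\Omega)$. Coherence$_1$: a collection $\{P(X_i\mid B_i):i\in I\}$ is coherent$_1$ if for every finite $\{i_1,\dots,i_n\}\subseteq I$, all real $\alpha_1,\dots,\alpha_n$ with $\alpha_j\ge 0$ whenever $P(X_{i_j}\mid B_{i_j})=+\infty$ and $\alpha_j\le 0$ whenever $P(X_{i_j}\mid B_{i_j})=-\infty$, and all real $c_1,\dots,c_n$ with $c_j=P(X_{i_j}\mid B_{i_j})$ whenever that prevision is finite, we have $\sup_\omega \sum_{j=1}^n \alpha_j B_{i_j}(\omega)[X_{i_j}(\omega)-c_j]\ge 0$. *)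

(* Defs.v *)
From Stdlib Require Import Reals List.
From Coquelicot Require Import Rbar.
Open Scope R_scope.

(* Events are boolean predicates on Omega, identified with their indicators. *)
Definition indic {Omega : Type} (B : Omega -> bool) (w : Omega) : R :=
  if B w then 1 else 0.

Definition nonempty_event {Omega : Type} (B : Omega -> bool) : Prop :=
  exists w, B w = true.

Definition full_event {Omega : Type} : Omega -> bool := fun _ => true.

(* A finite subfamily is a duplicate-free list l of indices; the
   coefficients alpha and constants c are given as functions on I.
   "sup_w G(w) >= 0" is written as: for every eps > 0 some w has G(w) > -eps. *)
Definition coherent1 {Omega I : Type} (X : I -> Omega -> R)
    (B : I -> Omega -> bool) (P : I -> Rbar) : Prop :=
  forall (l : list I), NoDup l ->
  forall (alpha c : I -> R),
    (forall i, In i l -> P i = p_infty -> 0 <= alpha i) ->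
    (forall i, In i l -> P i = m_infty -> alpha i <= 0) ->
    (forall i, In i l -> forall r, P i = Finite r -> c i = r) ->
    forall eps, 0 < eps ->
      exists w : Omega,
        - eps < fold_right Rplus 0
                  (map (fun i => alpha i * indic (B i) w * (X i w - c i)) l).

(* The family D extended by one new element (Y, C) with prevision p,
   indexed by option I (None is the new element). *)
Definition extX {Omega I : Type} (X : I -> Omega -> R) (Y : Omega -> R)
  : option I -> Omega -> R :=
  fun o => match o with Some i => X i | None => Y end.
Definition extB {Omega I : Type} (B : I -> Omega -> bool) (C : Omega -> bool)
  : option I -> Omega -> bool :=
  fun o => match o with Some i => B i | None => C end.
Definition extP {I : Type} (P : I -> Rbar) (p : Rbar) : option I -> Rbar :=
  fun o => match o with Some i => P i | None => p end.

(* Main.v *)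
Require Import Defs.
From Stdlib Require Import Reals List Lra Psatz ClassicalEpsilon.
From Coquelicot Require Import Rbar.
Open Scope R_scope.

Notation SS f l := (fold_right Rplus 0 (map f l)).

Lemma S_ext {T} (f g : T -> R) l : (forall x, In x l -> f x = g x) -> SS f l = SS g l.
Proof. induction l as [|a t IH]; simpl; intros H; auto.
  rewrite H by auto. rewrite IH by auto. reflexivity. Qed.

Lemma S_le {T} (f g : T -> R) l : (forall x, In x l -> f x <= g x) -> SS f l <= SS g l.
Proof. induction l as [|a t IH]; simpl; intros H; [lra|].
  specialize (IH (fun x Hx => H x (or_intror Hx))). specialize (H a (or_introl eq_refl)). lra. Qed.

Lemma S_plus {T} (f g : T -> R) l : SS (fun x => f x + g x) l = SS f l + SS g l.
Proof. induction l as [|a t IH]; simpl; [lra|]. rewrite IH. lra. Qed.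

Lemma S_zero {T} (f : T -> R) l : (forall x, In x l -> f x = 0) -> SS f l = 0.
Proof. induction l as [|a t IH]; simpl; intros H; auto.
  rewrite H by auto. rewrite IH by auto. lra. Qed.

Definition eqd {T} (x y : T) : {x = y} + {x <> y} := excluded_middle_informative (x = y).

Lemma S_delta {T} (j : T) u l : NoDup l -> In j l ->
  SS (fun i => if eqd i j then u else 0) l = u.
Proof.
  induction l as [|k t IH]; intros Hnd Hin; [destruct Hin|].
  inversion Hnd as [|? ? Hk Ht]; subst. simpl.
  destruct (eqd k j) as [->|Hne].
  - rewrite S_zero; [lra|]. intros x Hx. destruct (eqd x j); [subst; contradiction|reflexivity].
  - destruct Hin as [->|Hin]; [congruence|]. rewrite IH; auto; lra.
Qed.

Fixpoint strip {I} (l : list (option I)) : list I :=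
  match l with nil => nil | None :: t => strip t | Some i :: t => i :: strip t end.

Lemma In_strip {I} (l : list (option I)) i : In i (strip l) <-> In (Some i) l.
Proof. induction l as [|[j|] t IH]; simpl; [tauto| |].
 - rewrite IH. split; intros [H|H]; auto; left; congruence.
 - rewrite IH. split; auto. intros [H|H]; [discriminate|auto]. Qed.

Lemma NoDup_strip {I} (l : list (option I)) : NoDup l -> NoDup (strip l).
Proof. induction l as [|[j|] t IH]; simpl; intros H; [constructor| |];
  inversion H as [|? ? Hn Ht]; subst; auto.
  constructor; auto. rewrite In_strip. auto. Qed.

Lemma S_strip_noNone {I} (F : option I -> R) l : ~ In None l ->
  SS F l = SS (fun i => F (Some i)) (strip l).
Proof. induction l as [|[j|] t IH]; simpl; intros H; auto.
  rewrite IH; auto. exfalso; auto. Qed.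

Lemma S_strip_None {I} (F : option I -> R) l : NoDup l -> In None l ->
  SS F l = F None + SS (fun i => F (Some i)) (strip l).
Proof. induction l as [|[j|] t IH]; simpl; intros Hnd H; [destruct H| |];
  inversion Hnd as [|? ? Hn Ht]; subst.
  - destruct H as [H|H]; [discriminate|]. rewrite IH; auto. lra.
  - rewrite S_strip_noNone; auto. Qed.

Definition addl {T} (i : T) (l : list T) :=
  if excluded_middle_informative (In i l) then l else i :: l.

Lemma addl_NoDup {T} (i : T) l : NoDup l -> NoDup (addl i l).
Proof. unfold addl; destruct excluded_middle_informative; auto. constructor; auto. Qed.
Lemma addl_self {T} (i : T) l : In i (addl i l).
Proof. unfold addl; destruct excluded_middle_informative; simpl; auto. Qed.
Lemma addl_mono {T} (i j : T) l : In j l -> In j (addl i l).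
Proof. unfold addl; destruct excluded_middle_informative; simpl; auto. Qed.
Lemma S_addl {T} (f : T -> R) i l : (~ In i l -> f i = 0) -> SS f (addl i l) = SS f l.
Proof. unfold addl; destruct excluded_middle_informative; simpl; auto.
  intros H; rewrite H; auto; lra. Qed.

Lemma indic_full {Omega} (w : Omega) : indic full_event w = 1.
Proof. reflexivity. Qed.

Lemma ext_coh (Omega I : Type) (XD : I -> Omega -> R) (BD : I -> Omega -> bool) (P : I -> Rbar)
  (Hcoh : coherent1 XD BD P) (X : Omega -> R) (B : Omega -> bool) (iB iXB : I)
  (HiB : XD iB = indic B /\ BD iB = full_event)
  (HiXB : XD iXB = (fun w => X w * indic B w) /\ BD iXB = full_event)
  (HPB : P iB = Finite 0) (p : Rbar)
  (Hsign : forall aN : R, (p = p_infty -> 0 <= aN) -> (p = m_infty -> aN <= 0) ->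
      (forall q, P iXB = Finite q -> 0 <= aN * q) /\ (P iXB = p_infty -> 0 <= aN)
      /\ (P iXB = m_infty -> aN <= 0)) :
  coherent1 (extX XD X) (extB BD B) (extP P p).
Proof.
  intros l Hnd alpha c Hp Hm Hf eps Heps.
  destruct (excluded_middle_informative (In None l)) as [HN|HN].
  2: {
    destruct (Hcoh (strip l) (NoDup_strip _ Hnd) (fun i => alpha (Some i))
               (fun i => c (Some i))) with (eps:=eps) as [w Hw]; auto.
    - intros i Hi HP. apply (Hp (Some i)); [apply In_strip; auto| exact HP].
    - intros i Hi HP. apply (Hm (Some i)); [apply In_strip; auto| exact HP].
    - intros i Hi r HP. apply (Hf (Some i)); [apply In_strip; auto| exact HP].
    - exists w. rewrite (S_strip_noNone _ _ HN). exact Hw. }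
  set (aN := alpha None). set (cN := c None).
  assert (HaN1 : p = p_infty -> 0 <= aN) by exact (Hp None HN).
  assert (HaN2 : p = m_infty -> aN <= 0) by exact (Hm None HN).
  destruct (Hsign aN HaN1 HaN2) as [Hs1 [Hs2 Hs3]].
  set (lD := strip l).
  set (a0 := fun i => if excluded_middle_informative (In i lD) then alpha (Some i) else 0).
  set (c0 := fun i => if excluded_middle_informative (In i lD) then c (Some i)
                      else match P i with Finite r => r | _ => 0 end).
  assert (Hc0 : forall i r, P i = Finite r -> c0 i = r).
  { intros i r Hr. unfold c0. destruct excluded_middle_informative as [Hi|Hi].
    - apply (Hf (Some i)); [apply In_strip; exact Hi|exact Hr].
    - rewrite Hr; reflexivity. }
  assert (Ha0p : forall i, P i = p_infty -> 0 <= a0 i).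
  { intros i Hr. unfold a0. destruct excluded_middle_informative as [Hi|Hi]; [|lra].
    apply (Hp (Some i)); [apply In_strip; exact Hi|exact Hr]. }
  assert (Ha0m : forall i, P i = m_infty -> a0 i <= 0).
  { intros i Hr. unfold a0. destruct excluded_middle_informative as [Hi|Hi]; [|lra].
    apply (Hm (Some i)); [apply In_strip; exact Hi|exact Hr]. }
  set (cX' := match P iXB with p_infty => Rmax (c0 iXB) 0 | m_infty => Rmin (c0 iXB) 0
              | Finite _ => c0 iXB end).
  set (c' := fun i => if eqd i iXB then cX' else c0 i).
  set (a' := fun i => a0 i + (if eqd i iXB then aN else 0) + (if eqd i iB then -(aN*cN) else 0)).
  set (l' := addl iB (addl iXB lD)).
  assert (HnB : iB = iXB -> P iXB = Finite 0) by (intros E; rewrite <- E; exact HPB).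
  destruct (Hcoh l' (addl_NoDup _ _ (addl_NoDup _ _ (NoDup_strip _ Hnd))) a' c')
    with (eps := eps) as [w Hw]; auto.
  - intros i _ Hi. unfold a'. destruct (eqd i iB) as [->|Hb]; [congruence|].
    destruct (eqd i iXB) as [->|Hx].
    + specialize (Ha0p _ Hi). specialize (Hs2 Hi). lra.
    + specialize (Ha0p _ Hi). lra.
  - intros i _ Hi. unfold a'. destruct (eqd i iB) as [->|Hb]; [congruence|].
    destruct (eqd i iXB) as [->|Hx].
    + specialize (Ha0m _ Hi). specialize (Hs3 Hi). lra.
    + specialize (Ha0m _ Hi). lra.
  - intros i _ r Hi. unfold c'. destruct (eqd i iXB) as [->|Hx].
    + unfold cX'. rewrite Hi. apply Hc0; exact Hi.
    + apply Hc0; exact Hi.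
  - exists w.
    rewrite (S_strip_None _ _ Hnd HN). fold lD. simpl.
    set (t0 := fun i => a0 i * indic (BD i) w * (XD i w - c0 i)).
    set (d1 := fun i => if eqd i iXB then aN * (X w * indic B w) else 0).
    set (d2 := fun i => if eqd i iB then -(aN*cN) * indic B w else 0).
    assert (Hpt : forall i, a' i * indic (BD i) w * (XD i w - c' i) <= t0 i + d1 i + d2 i).
    { intros i. unfold a', c', t0, d1, d2.
      destruct (eqd i iXB) as [->|Hx].
      - destruct HiXB as [HX HBx]. rewrite HX, HBx, indic_full.
        destruct (eqd iXB iB) as [Hxb|Hxb].
        + assert (Hq := HnB (eq_sym Hxb)).
          assert (E : X w * indic B w = indic B w).
          { assert (E2 : XD iXB = XD iB) by (rewrite Hxb; reflexivity).
            rewrite HX, (proj1 HiB) in E2. exact (f_equal (fun f => f w) E2). }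
          unfold cX'. rewrite Hq. rewrite (Hc0 _ _ Hq). rewrite E. apply Req_le. ring.
        + unfold cX'. destruct (P iXB) as [q| |] eqn:Eq.
          * rewrite (Hc0 _ _ Eq). specialize (Hs1 q eq_refl). nra.
          * specialize (Hs2 eq_refl). specialize (Ha0p _ Eq).
            assert (H1 := Rmax_l (c0 iXB) 0). assert (H2 := Rmax_r (c0 iXB) 0).
            assert (0 <= a0 iXB * (Rmax (c0 iXB) 0 - c0 iXB)) by (apply Rmult_le_pos; lra).
            assert (0 <= aN * Rmax (c0 iXB) 0) by (apply Rmult_le_pos; lra).
            nra.
          * specialize (Hs3 eq_refl). specialize (Ha0m _ Eq).
            assert (H1 := Rmin_l (c0 iXB) 0). assert (H2 := Rmin_r (c0 iXB) 0).
            assert (0 <= (- a0 iXB) * (c0 iXB - Rmin (c0 iXB) 0)) by (apply Rmult_le_pos; lra).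
            assert (0 <= (- aN) * (- Rmin (c0 iXB) 0)) by (apply Rmult_le_pos; lra).
            nra.
      - destruct (eqd i iB) as [->|Hb].
        + destruct HiB as [HX HBx]. rewrite HX, HBx, indic_full, (Hc0 _ _ HPB).
          apply Req_le. ring.
        + apply Req_le. ring. }
    assert (Hle := S_le _ _ l' (fun i _ => Hpt i)).
    rewrite S_plus, S_plus in Hle.
    assert (Hd1 : SS d1 l' = aN * (X w * indic B w)).
    { apply S_delta. apply addl_NoDup, addl_NoDup, NoDup_strip, Hnd.
      apply addl_mono, addl_self. }
    assert (Hd2 : SS d2 l' = -(aN*cN) * indic B w).
    { apply S_delta. apply addl_NoDup, addl_NoDup, NoDup_strip, Hnd. apply addl_self. }
    assert (Ht0 : SS t0 l' = SS t0 lD).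
    { unfold l'. rewrite S_addl, S_addl; auto.
      - intros Hi. unfold t0, a0. destruct excluded_middle_informative; [contradiction|]. ring.
      - intros Hi. unfold t0, a0. destruct excluded_middle_informative as [Hi2|]; [|ring].
        exfalso; apply Hi; apply addl_mono; exact Hi2. }
    assert (Ht1 : SS t0 lD = SS (fun i => alpha (Some i) * indic (BD i) w * (XD i w - c (Some i))) lD).
    { apply S_ext. intros x Hx. unfold t0, a0, c0.
      destruct excluded_middle_informative; [reflexivity|contradiction]. }
    rewrite Hd1, Hd2, Ht0, Ht1 in Hle.
    fold aN cN.
    lra.
Qed.

Lemma contra_lemma (Omega I : Type) (XD : I -> Omega -> R) (BD : I -> Omega -> bool) (P : I -> Rbar)
  (X : Omega -> R) (B : Omega -> bool) (iB iXB : I)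
  (HiB : XD iB = indic B /\ BD iB = full_event)
  (HiXB : XD iXB = (fun w => X w * indic B w) /\ BD iXB = full_event)
  (HPB : P iB = Finite 0) (p : Rbar) (Hne : iXB <> iB)
  (Hc : coherent1 (extX XD X) (extB BD B) (extP P p))
  (s cX : R) (Hsc : s * cX < 0)
  (H1 : P iXB = p_infty -> 0 <= -s) (H2 : P iXB = m_infty -> -s <= 0)
  (H3 : forall r, P iXB = Finite r -> cX = r)
  (H4 : p = p_infty -> 0 <= s) (H5 : p = m_infty -> s <= 0) : False.
Proof.
  set (cN := match p with Finite r => r | _ => 0 end).
  set (alpha := fun o : option I => match o with None => s | Some i =>
        if eqd i iXB then -s else if eqd i iB then s*cN else 0 end).
  set (c := fun o : option I => match o with None => cN | Some i =>
        if eqd i iXB then cX else 0 end).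
  assert (Hnb : Some iXB <> Some iB) by congruence.
  destruct (Hc (None :: Some iXB :: Some iB :: nil)) with (alpha := alpha) (c := c)
    (eps := - (s * cX)) as [w Hw].
  - constructor. simpl; intros [E|[E|E]]; try discriminate; auto.
    constructor. simpl; intros [E|E]; auto.
    constructor; auto. constructor.
  - intros i Hi HP. simpl in Hi. destruct Hi as [<-|[<-|[<-|[]]]]; simpl in HP |- *.
    + auto.
    + destruct (eqd iXB iXB); [|congruence]. auto.
    + congruence.
  - intros i Hi HP. simpl in Hi. destruct Hi as [<-|[<-|[<-|[]]]]; simpl in HP |- *.
    + auto.
    + destruct (eqd iXB iXB); [|congruence]. auto.
    + congruence.
  - intros i Hi r HP. simpl in Hi. destruct Hi as [<-|[<-|[<-|[]]]]; simpl in HP |- *.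
    + unfold cN; rewrite HP; reflexivity.
    + destruct (eqd iXB iXB); [|congruence]. auto.
    + destruct (eqd iB iXB); [congruence|]. congruence.
  - lra.
  - simpl in Hw. destruct (eqd iXB iXB); [|congruence].
    destruct (eqd iB iXB); [congruence|]. destruct (eqd iB iB); [|congruence].
    destruct HiB as [HX1 HB1]; destruct HiXB as [HX2 HB2].
    rewrite HX1, HB1, HX2, HB2, !indic_full in Hw. nra.
Qed.

Theorem lemma6p2 (Omega : Type) (w0 : Omega) (I : Type)
  (XD : I -> Omega -> R) (BD : I -> Omega -> bool) (P : I -> Rbar)
  (HBD : forall i, nonempty_event (BD i))
  (Hcoh : coherent1 XD BD P)
  (X : Omega -> R) (B : Omega -> bool) (HB : nonempty_event B)
  (iB iXB : I)
  (HiB : XD iB = indic B /\ BD iB = full_event)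
  (HiXB : XD iXB = (fun w => X w * indic B w) /\ BD iXB = full_event)
  (HPB : P iB = Finite 0) :
  (P iXB <> Finite 0 ->
     forall p : Rbar,
       coherent1 (extX XD X) (extB BD B) (extP P p) <->
       p = (if Rbar_lt_dec (Finite 0) (P iXB) then p_infty else m_infty))
  /\
  (P iXB = Finite 0 ->
     forall p : Rbar, coherent1 (extX XD X) (extB BD B) (extP P p)).
Proof.
  split.
  - intros Hq p.
    assert (Hne : iXB <> iB) by (intro E; apply Hq; rewrite E; exact HPB).
    split.
    + intros Hc. destruct (Rbar_lt_dec (Finite 0) (P iXB)) as [Hlt|Hge].
      * destruct p as [r| |]; [exfalso| reflexivity | exfalso];
        apply (contra_lemma Omega I XD BD P X B iB iXB HiB HiXB HPB _ Hne Hc (-1)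
                 (match P iXB with Finite r => r | _ => 1 end));
        destruct (P iXB) as [q| |]; simpl in Hlt; try contradiction;
        try discriminate; intros; try lra; try congruence.
      * destruct p as [r| |]; [exfalso| exfalso | reflexivity];
        apply (contra_lemma Omega I XD BD P X B iB iXB HiB HiXB HPB _ Hne Hc 1
                 (match P iXB with Finite r => r | _ => -1 end));
        destruct (P iXB) as [q| |]; simpl in Hge; try (exfalso; apply Hge; exact I);
        intros; try discriminate; try lra; try congruence;
        assert (q <> 0) by (intro E; apply Hq; rewrite E; reflexivity);
        assert (~ 0 < q) by exact Hge; lra.
    + intros ->. apply (ext_coh Omega I XD BD P Hcoh X B iB iXB HiB HiXB HPB).
      intros aN Ha1 Ha2.
      destruct (Rbar_lt_dec (Finite 0) (P iXB)) as [Hlt|Hge].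
      * specialize (Ha1 eq_refl).
        destruct (P iXB) as [q| |]; simpl in Hlt; try contradiction;
        repeat split; intros; try discriminate; try lra.
        injection H as <-. nra.
      * specialize (Ha2 eq_refl).
        destruct (P iXB) as [q| |]; simpl in Hge; try (exfalso; apply Hge; exact I);
        repeat split; intros; try discriminate; try lra.
        injection H as <-.
        assert (q <> 0) by (intro E; apply Hq; rewrite E; reflexivity).
        assert (~ 0 < q) by exact Hge. nra.
  - intros Hq p. apply (ext_coh Omega I XD BD P Hcoh X B iB iXB HiB HiXB HPB).
    intros aN _ _. rewrite Hq. repeat split; intros; try discriminate.
    injection H as <-. lra.
Qed.
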